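(* Let $N\ge 2$ be an integer and index rows and columns of $N\times N$ matrices by $0,1,\dots,N-1$. Let $H$ be the real tridiagonal $N\times N$ matrix with diagonal entries $H_{n,n}=2n-N+1$ for $n=0,\dots,N-1$, superdiagonal entries $H_{n-1,n}=\sqrt{n(N-n)}$ and subdiagonal entries $H_{n,n-1}=-\sqrt{n(N-n)}$ for $n=1,\dots,N-1$ (all other entries zero). Let $J$ be the $N\times N$ nilpotent Jordan block, $J_{n,n+1}=1$ for $n=0,\dots,N-2$ and all other entries zero. Define the diagonal matrices $C$, $F$ and the matrix $P$ by $$C_{n,n}=\sqrt{\binom{N-1}{n}},\qquad F_{n,n}=(-1)^{N-n-1}\,(N-1-n)!,\qquad P_{m,q}=\binom{N-1-m}{q}\quad (n,m,q=0,\dots,N-1),$$ with the convention $\binom{a}{b}=0$ for $b>a$. Then $Q:=C\,P\,F$ is invertible and satisfies $H\,Q=Q\,J$, i.e. $Q^{-1}HQ=J$.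
   Context: $H$ is the discrete anharmonic-oscillator Hamiltonian $H^{(N)}_{(AO)}(\lambda)$ at its exceptional point $\lambda=0$; $Q$ is called the transition matrix (it brings $H$ to the Jordan block with eigenvalue $0$). *)

(* Defs.v *)
(* Matrices over an arbitrary real closed field R
   (covers the real numbers; Num.sqrt is the nonnegative square root). *)
From HB Require Import structures.
From mathcomp Require Import all_boot all_order all_algebra.
Set Implicit Arguments. Unset Strict Implicit. Unset Printing Implicit Defensive.
Import Order.TTheory GRing.Theory Num.Theory.
Local Open Scope ring_scope.

Definition Hmat (R : rcfType) (N : nat) : 'M[R]_N :=
  \matrix_(i < N, j < N)
    (if (i == j :> nat) then ((2 * i)%:R - N%:R + 1)
     else if (j == i.+1 :> nat) then Num.sqrt ((j * (N - j))%:R)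
     else if (i == j.+1 :> nat) then - Num.sqrt ((i * (N - i))%:R)
     else 0).

Definition Jmat (R : rcfType) (N : nat) : 'M[R]_N :=
  \matrix_(i < N, j < N) (if (j == i.+1 :> nat) then 1 else 0).

Definition Cmat (R : rcfType) (N : nat) : 'M[R]_N :=
  \matrix_(i < N, j < N)
    (if (i == j :> nat) then Num.sqrt ('C(N.-1, i))%:R else 0).

Definition Fmat (R : rcfType) (N : nat) : 'M[R]_N :=
  \matrix_(i < N, j < N)
    (if (i == j :> nat) then (-1) ^+ (N - i - 1) * ((N - 1 - i)`!)%:R else 0).

(* binomial 'C(a,b) = 0 for b > a in mathcomp *)
Definition Pmat (R : rcfType) (N : nat) : 'M[R]_N :=
  \matrix_(m < N, q < N) ('C(N - 1 - m, q))%:R.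

Definition Qmat (R : rcfType) (N : nat) : 'M[R]_N :=
  Cmat R N *m Pmat R N *m Fmat R N.

(* Main.v *)
Require Import Defs.
From HB Require Import structures.
From mathcomp Require Import all_boot all_order all_algebra.
From mathcomp Require Import fingroup perm zify ring lra.
Import Order.TTheory GRing.Theory Num.Theory.
Local Open Scope ring_scope.

Section Aux.
Variable R : rcfType.

Lemma pickA (N m : nat) (g : nat -> R) :
  \sum_(k < N) (if m == (k : nat) then g k else 0) = if (m < N)%N then g m else 0.
Proof.
rewrite -(big_mkord xpredT (fun k => if m == k then g k else 0)).
elim: N => [|n IH]; first by rewrite big_nil.
rewrite big_nat_recr //= IH ltnS.
by case: (ltngtP m n) => [h|h|->]; rewrite ?addr0 ?add0r.
Qed.

Lemma pickB (N m : nat) (g : nat -> R) :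
  \sum_(k < N) (if (k : nat) == m then g k else 0) = if (m < N)%N then g m else 0.
Proof. by rewrite -pickA; apply: eq_bigr => k _; rewrite eq_sym. Qed.

Lemma pickC (N m : nat) (g : nat -> R) :
  \sum_(k < N) (if m == (k : nat).+1 then g k else 0) =
  if m is m'.+1 then (if (m' < N)%N then g m' else 0) else 0.
Proof.
case: m => [|m'].
  by rewrite big1.
by rewrite -pickA; apply: eq_bigr => k _; rewrite eqSS.
Qed.

Lemma split3 (i k : nat) (a b c : R) :
  (if i == k then a else if k == i.+1 then b else if i == k.+1 then c else 0) =
  (if i == k then a else 0) + (if k == i.+1 then b else 0) + (if i == k.+1 then c else 0).
Proof.
by do 3 (case: eqP => ?); rewrite ?addr0 ?add0r //; exfalso; lia.
Qed.

Lemma sqrt_natsq (n c : nat) :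
  Num.sqrt ((n * n * c)%:R : R) = n%:R * Num.sqrt (c%:R).
Proof.
rewrite natrM sqrtrM ?ler0n // natrM -expr2 sqrtr_sqr ger0_norm //.
Qed.

Lemma binL (a j : nat) :
  (a * 'C(a, j.+1) = a * 'C(a.-1, j.+1) + (a - j) * 'C(a, j))%N.
Proof.
rewrite (mul_bin_down a j.+1) -(mul_bin_left a j) -mulnDl.
case: (leqP j.+1 a) => h; first by rewrite subnK.
by rewrite bin_small // !muln0.
Qed.

Lemma ident (i a j : nat) : (j <= i + a)%N ->
  (i%:R - a%:R) * ('C(a, j))%:R + a%:R * ('C(a.-1, j))%:R - i%:R * ('C(a.+1, j))%:R
  = (if j is j'.+1 then - ((i + a - j')%:R) * ('C(a, j'))%:R else 0 : R).
Proof.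
case: j => [|j'] hj.
  rewrite !bin0; case: a {hj} => [|a] /=; rewrite ?mul0r; ring.
have L := binL a j'.
rewrite binS.
case: (leqP j' a) => h.
  move/(congr1 (fun n => n%:R : R)): L; rewrite natrD !natrM natrB // => L.
  rewrite natrD natrB; last lia.
  rewrite natrD; lra.
rewrite !bin_small //; last lia.
  rewrite !mulr0; ring.
case: a h {L hj} => // a h /=; lia.
Qed.
Definition sC (M i : nat) : R := Num.sqrt ('C(M, i))%:R.
Definition fF (N j : nat) : R := (-1) ^+ (N - j - 1) * ((N - 1 - j)`!)%:R.

Lemma CPE (N : nat) (i k : 'I_N) :
  (Cmat R N *m Pmat R N) i k = sC N.-1 i * ('C(N - 1 - i, k))%:R.
Proof.
rewrite mxE (eq_bigr (fun l : 'I_N => if (i : nat) == l then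
   sC N.-1 i * ('C(N - 1 - l, k))%:R else 0)).
  by rewrite (pickA N i (fun l => sC N.-1 i * ('C(N - 1 - l, k))%:R)) ltn_ord.
move=> l _; rewrite !mxE; case: eqP => [->|_]; last by rewrite mul0r.
by [].
Qed.

Lemma QE (N : nat) (i j : 'I_N) :
  Qmat R N i j = sC N.-1 i * ('C(N - 1 - i, j))%:R * fF N j.
Proof.
rewrite /Qmat mxE (eq_bigr (fun k : 'I_N => if (k : nat) == j then
   sC N.-1 i * ('C(N - 1 - i, k))%:R * fF N k else 0)).
  by rewrite (pickB N j (fun k => sC N.-1 i * ('C(N - 1 - i, k))%:R * fF N k)) ltn_ord.
move=> k _; rewrite CPE mxE; case: eqP => [->|_]; last by rewrite mulr0.
by [].
Qed.
Lemma sq1 M i : Num.sqrt (((i.+1) * (M - i))%:R) * sC M i.+1 = (M - i)%:R * sC M i.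
Proof.
rewrite /sC -sqrtrM ?ler0n // -natrM.
have -> : (i.+1 * (M - i) * 'C(M, i.+1) = (M - i) * (M - i) * 'C(M, i))%N.
  by rewrite mulnAC mul_bin_left mulnAC.
exact: sqrt_natsq.
Qed.

Lemma sq2 M i : Num.sqrt (((i.+1) * (M - i))%:R) * sC M i = (i.+1)%:R * sC M i.+1.
Proof.
rewrite /sC -sqrtrM ?ler0n // -natrM.
have -> : (i.+1 * (M - i) * 'C(M, i) = i.+1 * i.+1 * 'C(M, i.+1))%N.
  by rewrite -mulnA -mul_bin_left mulnA.
exact: sqrt_natsq.
Qed.

Lemma fFS M j : (j < M)%N -> fF M.+1 j = - (M - j)%:R * fF M.+1 j.+1.
Proof.
move=> h; rewrite /fF !subSS !subn0 subn1 /=.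
have e : (M.+1 - j).-1 = (M - j.+1).+1 by lia.
have e2 : (M - j = (M - j.+1).+1)%N by lia.
rewrite e e2 subn1 /= factS natrM exprS; ring.
Qed.

Lemma mulr_if0 (b : bool) (x y : R) : (if b then x else 0) * y = if b then x * y else 0.
Proof. by case: b; rewrite ?mul0r. Qed.

Lemma sq1' M i x y : Num.sqrt (((i.+1) * (M - i))%:R) * (sC M i.+1 * x * y) = (M - i)%:R * (sC M i * x * y).
Proof. by rewrite !mulrA sq1. Qed.

Lemma sq2' M i x y : Num.sqrt (((i.+1) * (M - i))%:R) * (sC M i * x * y) = (i.+1)%:R * (sC M i.+1 * x * y).
Proof. by rewrite !mulrA sq2. Qed.

Lemma HQJ N : Hmat R N *m Qmat R N = Qmat R N *m Jmat R N.
Proof.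
apply/matrixP => i j; rewrite !mxE.
set qn := fun k j : nat => sC N.-1 k * ('C(N - 1 - k, j))%:R * fF N j.
rewrite (eq_bigr (fun k : 'I_N =>
  (if (i : nat) == k then ((2 * i)%:R - N%:R + 1) * qn k j else 0)
+ (if (k : nat) == i.+1 then Num.sqrt ((k * (N - k))%:R) * qn k j else 0)
+ (if (i : nat) == k.+1 then - Num.sqrt ((i * (N - i))%:R) * qn k j else 0))); last first.
  move=> k _; rewrite mxE split3 QE /qn.
  by case: eqP => ?; case: eqP => ?; case: eqP => ?; ring.
rewrite [RHS](eq_bigr (fun k : 'I_N => if (j : nat) == k.+1 then qn i k else 0)); last first.
  by move=> k _; rewrite QE mxE; case: eqP; rewrite ?mulr0 ?mulr1.
rewrite !big_split /=.
rewrite (pickA N i (fun k => ((2 * i)%:R - N%:R + 1) * qn k j)).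
rewrite (pickB N i.+1 (fun k => Num.sqrt ((k * (N - k))%:R) * qn k j)).
rewrite (pickC N i (fun k => - Num.sqrt ((i * (N - i))%:R) * qn k j)).
rewrite (pickC N j (fun k => qn i k)).
rewrite /qn {qn}.
case: N i j => [[]//|M] i j.
rewrite ltn_ord.
move: (ltn_ord i) (ltn_ord j) => /=.
move: (nat_of_ord i) (nat_of_ord j) => {}i {}j hi hj.
rewrite !subSS !subn0.
have -> : (if (i.+1 < M.+1)%N then Num.sqrt ((i.+1 * (M - i))%:R) * (sC M i.+1 * ('C(M - i.+1, j))%:R * fF M.+1 j) else 0)
  = Num.sqrt ((i.+1 * (M - i))%:R) * (sC M i.+1 * ('C(M - i.+1, j))%:R * fF M.+1 j).
  case: ifP => // h; rewrite /sC bin_small ?sqrtr0 ?mul0r ?mulr0 //; lia.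
rewrite sq1'.
have [a Ma] : exists a, M = (i + a)%N by exists (M - i)%N; lia.
have T3 : match i with
  | 0%N => 0
  | m'.+1 =>
      if (m' < M.+1)%N
      then
       - Num.sqrt ((i * (M.+1 - i))%:R) *
       (sC M m' * ('C(M - m', j))%:R * fF M.+1 j)
      else 0
  end = - i%:R * (sC M i * ('C(a.+1, j))%:R * fF M.+1 j).
  case: i hi Ma => [|i'] hi Ma; first by rewrite mulNr mul0r oppr0.
  rewrite (_ : (i' < M.+1)%N = true); last by lia.
  rewrite subSS !mulNr sq2'.
  by rewrite (_ : (M - i' = a.+1)%N) //; lia.
rewrite T3 {T3}.
have E1 : (M - i = a)%N by lia.
have E2 : (M - i.+1 = a.-1)%N by lia.
rewrite E1 E2.
have I := ident i a j.
rewrite (_ : ((2 * i)%:R - M.+1%:R + 1) * (sC M i * ('C(a, j))%:R * fF M.+1 j) +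
   a%:R * (sC M i * ('C(a.-1, j))%:R * fF M.+1 j) +
   - i%:R * (sC M i * ('C(a.+1, j))%:R * fF M.+1 j) =
   sC M i * fF M.+1 j * ((i%:R - a%:R) * ('C(a, j))%:R + a%:R * ('C(a.-1, j))%:R - i%:R * ('C(a.+1, j))%:R)); last first.
  rewrite Ma; ring.
rewrite I; last by lia.
case: j hj {I E1 E2} => [|j'] hj; first by rewrite mulr0.
rewrite (_ : (j' < M.+1)%N = true); last by lia.
have hj' : (j' < M)%N by lia.
rewrite (@fFS M j' hj') -Ma; ring.
Qed.
Lemma Qunit N : Qmat R N \in unitmx.
Proof.
rewrite unitmxE unitfE /Qmat !det_mulmx.
have hP : Pmat R N = row_perm (perm (@rev_ord_inj N)) (\matrix_(a < N, q < N) ('C(a, q))%:R).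
  apply/matrixP => m q; rewrite !mxE permE /=.
  by rewrite (_ : (N - 1 - m = N - m.+1)%N) //; lia.
rewrite hP row_permE det_mulmx det_perm.
rewrite !det_trig.
- rewrite !mulf_neq0 ?signr_eq0 //; apply/prodf_neq0 => k _; rewrite !mxE ?eqxx.
  + rewrite /= sqrtr_eq0 -ltNge ltr0n bin_gt0; have := ltn_ord k; lia.
  + by rewrite binn oner_eq0.
  + by rewrite mulf_neq0 ?signr_eq0 // pnatr_eq0 -lt0n fact_gt0.
- apply/is_trig_mxP => a b h; rewrite !mxE; case: eqP => //; lia.
- apply/is_trig_mxP => a b h; rewrite !mxE bin_small //.
- apply/is_trig_mxP => a b h; rewrite !mxE; case: eqP => //; lia.
Qed.
End Aux.

Theorem mainTheorem2 (R : rcfType) (N : nat) (hN : (2 <= N)%N) :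
  Qmat R N \in unitmx /\ Hmat R N *m Qmat R N = Qmat R N *m Jmat R N.
Proof. split; [exact: Qunit | exact: HQJ]. Qed.
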